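(* Let $\mathcal{C}$ be a deflation-exact category and $\mathcal{A}$ an admissibly deflation-percolating subcategory. (1) Consider a commutative diagram $$\begin{array}{ccccc} X&\rightarrowtail&Y&\twoheadrightarrow&Z\\ \downarrow{\scriptstyle f}&&\downarrow{\scriptstyle g}&&\downarrow{\scriptstyle h}\\ X'&\rightarrowtail&Y'&\twoheadrightarrow&Z'\end{array}$$ whose rows are conflations and where $f$ and $h$ are inflations. (a) If $f$ is an $\mathcal{A}^{-1}$-inflation, then $g$ is an inflation. (b) If additionally $h$ is an $\mathcal{A}^{-1}$-inflation, then $g$ is an $\mathcal{A}^{-1}$-inflation. (2) Consider a commutative diagram of the same shape whose rows are conflations and where $f$ and $h$ are deflations. (a) If $f$ is an $\mathcal{A}^{-1}$-deflation, then $g$ is a deflation. (b) If additionally $h$ is an $\mathcal{A}^{-1}$-deflation, then $g$ is an $\mathcal{A}^{-1}$-deflation.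
   Context: A conflation category is an additive category with a class of kernel-cokernel pairs (closed under isomorphisms) called conflations; first map an inflation, second a deflation. A deflation-exact category is a conflation category satisfying: (R0) $1_0$ is a deflation; (R1) composites of deflations are deflations; (R2) pullbacks of deflations along arbitrary morphisms exist and are deflations. A non-empty full subcategory $\mathcal{A}$ is admissibly deflation-percolating if: (A1) for every conflation $A'\rightarrowtail A\twoheadrightarrow A''$, $A\in\mathcal{A}$ iff $A',A''\in\mathcal{A}$; (A2) every morphism $C\to A$ with $A\in\mathcal{A}$ factors as a deflation $C\twoheadrightarrow A'$ followed by an inflation $A'\rightarrowtail A$ with $A'\in\mathcal{A}$; (A3) if $a\colon C\rightarrowtail D$ is an inflation and $b\colon C\twoheadrightarrow A$ a deflation with $A\in\mathcal{A}$, the pushout of $a$ along $b$ exists and yields a deflation $D\twoheadrightarrow P$ and an inflation $A\rightarrowtail P$. An $\mathcal{A}^{-1}$-inflation is an inflation with cokernel in $\mathcal{A}$; an $\mathcal{A}^{-1}$-deflation is a deflation with kernel in $\mathcal{A}$. *)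

(* Defs.v *)
From HB Require Import structures.
From mathcomp Require Import all_boot all_algebra.
Set Implicit Arguments. Unset Strict Implicit. Unset Printing Implicit Defensive.
Import GRing.Theory.
Local Open Scope ring_scope.

Record PreAdditive := {
  obj : Type;
  mor : obj -> obj -> zmodType;
  idm : forall a, mor a a;
  comp : forall a b c, mor b c -> mor a b -> mor a c;
  compA : forall a b c d (h : mor c d) (g : mor b c) (f : mor a b),
      comp h (comp g f) = comp (comp h g) f;
  comp1m : forall a b (f : mor a b), comp (idm b) f = f;
  compm1 : forall a b (f : mor a b), comp f (idm a) = f;
  compDl : forall a b c (g1 g2 : mor b c) (f : mor a b),
      comp (g1 + g2) f = comp g1 f + comp g2 f;
  compDr : forall a b c (g : mor b c) (f1 f2 : mor a b),
      comp g (f1 + f2) = comp g f1 + comp g f2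
}.

Arguments idm {C} a : rename.
Arguments comp {C a b c} : rename.
Notation "g \oc f" := (comp g f) (at level 40, left associativity).

Section Defs.
Variable C : PreAdditive.
Implicit Types a b c : obj C.

Definition is_zero_obj (z : obj C) : Prop :=
  (forall a (f g : mor z a), f = g) /\ (forall a (f g : mor a z), f = g).

Definition is_iso a b (f : mor a b) : Prop :=
  exists g : mor b a, g \oc f = idm a /\ f \oc g = idm b.

Definition is_kernel a b c (i : mor a b) (p : mor b c) : Prop :=
  p \oc i = 0 /\
  forall x (t : mor x b), p \oc t = 0 -> exists! u : mor x a, i \oc u = t.

Definition is_cokernel a b c (i : mor a b) (p : mor b c) : Prop :=
  p \oc i = 0 /\
  forall x (t : mor b x), t \oc i = 0 -> exists! u : mor c x, u \oc p = t.

Definition kernel_cokernel_pair a b c (i : mor a b) (p : mor b c) : Prop :=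
  is_kernel i p /\ is_cokernel i p.

(* (P, p', f') is a pullback of p : b -> c along f : c' -> c:
      P --f'--> b
      |p'       |p
      c' --f--> c                                                        *)
Definition is_pullback b c c' P (p : mor b c) (f : mor c' c)
    (f' : mor P b) (p' : mor P c') : Prop :=
  p \oc f' = f \oc p' /\
  forall x (u : mor x b) (v : mor x c'), p \oc u = f \oc v ->
    exists! w : mor x P, f' \oc w = u /\ p' \oc w = v.

(* (P, d, m) is a pushout of a : c -> d0 along b : c -> a0:
      c  --a--> d0
      |b        |d
      a0 --m--> P                                                        *)
Definition is_pushout c d0 a0 P (a : mor c d0) (b : mor c a0)
    (d : mor d0 P) (m : mor a0 P) : Prop :=
  d \oc a = m \oc b /\
  forall x (u : mor d0 x) (v : mor a0 x), u \oc a = v \oc b ->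
    exists! w : mor P x, w \oc d = u /\ w \oc m = v.

End Defs.

Record Additive := {
  pre :> PreAdditive;
  zero_obj : obj pre;
  zero_objP : is_zero_obj zero_obj;
  biproducts : forall a b : obj pre, exists (s : obj pre)
      (i1 : mor a s) (i2 : mor b s) (p1 : mor s a) (p2 : mor s b),
      [/\ p1 \oc i1 = idm a, p2 \oc i2 = idm b, p1 \oc i2 = 0, p2 \oc i1 = 0
        & i1 \oc p1 + i2 \oc p2 = idm s]
}.

Record ConflationCat := {
  addc :> Additive;
  conf : forall a b c : obj addc, mor a b -> mor b c -> Prop;
  conf_kc : forall a b c (i : mor a b) (p : mor b c),
      conf i p -> kernel_cokernel_pair i p;
  conf_iso : forall a b c a' b' c' (i : mor a b) (p : mor b c)
      (i' : mor a' b') (p' : mor b' c')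
      (al : mor a a') (be : mor b b') (ga : mor c c'),
      is_iso al -> is_iso be -> is_iso ga ->
      be \oc i = i' \oc al -> ga \oc p = p' \oc be ->
      conf i p -> conf i' p'
}.

Section Conf.
Variable C : ConflationCat.

Definition inflation (a b : obj C) (i : mor a b) : Prop :=
  exists (c : obj C) (p : mor b c), conf i p.
Definition deflation (b c : obj C) (p : mor b c) : Prop :=
  exists (a : obj C) (i : mor a b), conf i p.

Definition deflation_exact : Prop :=
  deflation (idm (zero_obj C)) /\
  (forall a b c (p : mor a b) (q : mor b c),
               deflation p -> deflation q -> deflation (q \oc p)) /\
  (forall b c c' (p : mor b c) (f : mor c' c), deflation p ->
               exists (P : obj C) (f' : mor P b) (p' : mor P c'),
                 is_pullback p f f' p' /\ deflation p').

(* A full subcategory is given by a predicate on objects. *)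
Definition admissibly_deflation_percolating (A : obj C -> Prop) : Prop :=
  (exists a, A a) /\
  (forall a' a a'' (i : mor a' a) (p : mor a a''), conf i p ->
               (A a <-> A a' /\ A a'')) /\
  (forall c a (f : mor c a), A a ->
               exists (a' : obj C) (d : mor c a') (m : mor a' a),
                 [/\ A a', deflation d, inflation m & f = m \oc d]) /\
  (forall c d0 a0 (a : mor c d0) (b : mor c a0),
               inflation a -> deflation b -> A a0 ->
               exists (P : obj C) (d : mor d0 P) (m : mor a0 P),
                 [/\ is_pushout a b d m, deflation d & inflation m]).

Definition Ainv_inflation (A : obj C -> Prop) (a b : obj C) (i : mor a b) : Prop :=
  exists (c : obj C) (p : mor b c), conf i p /\ A c.
Definition Ainv_deflation (A : obj C -> Prop) (b c : obj C) (p : mor b c) : Prop :=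
  exists (a : obj C) (i : mor a b), conf i p /\ A a.

End Conf.

(* Main.v *)
Require Import Defs.
From mathcomp Require Import all_boot all_algebra.
Set Implicit Arguments. Unset Strict Implicit. Unset Printing Implicit Defensive.
Import GRing.Theory.
Local Open Scope ring_scope.

Section Basics.
Variable C : ConflationCat.
Implicit Types a b c : obj C.

Lemma comp0r a b c (g : mor b c) : g \oc (0 : mor a b) = 0.
Proof. apply: (@addrI _ (g \oc 0)); by rewrite -compDr !addr0. Qed.
Lemma comp0l a b c (f : mor a b) : (0 : mor b c) \oc f = 0.
Proof. apply: (@addrI _ (0 \oc f)); by rewrite -compDl !addr0. Qed.
Lemma compNr a b c (g : mor b c) (f : mor a b) : g \oc (- f) = - (g \oc f).
Proof. apply: (@addrI _ (g \oc f)); by rewrite -compDr !subrr comp0r. Qed.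
Lemma compNl a b c (g : mor b c) (f : mor a b) : (- g) \oc f = - (g \oc f).
Proof. apply: (@addrI _ (g \oc f)); by rewrite -compDl !subrr comp0l. Qed.
Lemma compBr a b c (g : mor b c) (f1 f2 : mor a b) : g \oc (f1 - f2) = g \oc f1 - g \oc f2.
Proof. by rewrite compDr compNr. Qed.
Lemma compBl a b c (g1 g2 : mor b c) (f : mor a b) : (g1 - g2) \oc f = g1 \oc f - g2 \oc f.
Proof. by rewrite compDl compNl. Qed.

Lemma zero_out a (f g : mor (zero_obj C) a) : f = g.
Proof. exact: (zero_objP C).1. Qed.
Lemma zero_in a (f g : mor a (zero_obj C)) : f = g.
Proof. exact: (zero_objP C).2. Qed.

Lemma iso_id a : is_iso (idm a).
Proof. exists (idm a); by rewrite comp1m. Qed.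

Lemma conf_ker a b c (i : mor a b) (p : mor b c) : conf i p -> is_kernel i p.
Proof. by move/conf_kc => []. Qed.
Lemma conf_coker a b c (i : mor a b) (p : mor b c) : conf i p -> is_cokernel i p.
Proof. by move/conf_kc => []. Qed.
Lemma conf_pi a b c (i : mor a b) (p : mor b c) : conf i p -> p \oc i = 0.
Proof. by move/conf_ker => []. Qed.

Lemma ker_mono a b c (i : mor a b) (p : mor b c) : is_kernel i p ->
  forall x (u v : mor x a), i \oc u = i \oc v -> u = v.
Proof.
move=> [Hpi Hk] x u v Huv.
have H0 : p \oc (i \oc u) = 0 by rewrite Defs.compA Hpi comp0l.
have [w [_ Hw]] := Hk x (i \oc u) H0.
by rewrite -(Hw u erefl) (Hw v (esym Huv)).
Qed.
Lemma coker_epi a b c (i : mor a b) (p : mor b c) : is_cokernel i p ->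
  forall x (u v : mor c x), u \oc p = v \oc p -> u = v.
Proof.
move=> [Hpi Hk] x u v Huv.
have H0 : (u \oc p) \oc i = 0 by rewrite -Defs.compA Hpi comp0r.
have [w [_ Hw]] := Hk x (u \oc p) H0.
by rewrite -(Hw u erefl) (Hw v (esym Huv)).
Qed.
Lemma conf_mono a b c (i : mor a b) (p : mor b c) : conf i p ->
  forall x (u v : mor x a), i \oc u = i \oc v -> u = v.
Proof. by move/conf_ker/ker_mono. Qed.
Lemma conf_epi a b c (i : mor a b) (p : mor b c) : conf i p ->
  forall x (u v : mor c x), u \oc p = v \oc p -> u = v.
Proof. by move/conf_coker/coker_epi. Qed.

Lemma ker_fact a b c (i : mor a b) (p : mor b c) : is_kernel i p ->
  forall x (t : mor x b), p \oc t = 0 -> exists u : mor x a, i \oc u = t.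
Proof. move=> [_ Hk] x t /Hk [u [Hu _]]; by exists u. Qed.
Lemma coker_fact a b c (i : mor a b) (p : mor b c) : is_cokernel i p ->
  forall x (t : mor b x), t \oc i = 0 -> exists u : mor c x, u \oc p = t.
Proof. move=> [_ Hk] x t /Hk [u [Hu _]]; by exists u. Qed.

Lemma ker_conf a b c a2 (i : mor a b) (p : mor b c) (i2 : mor a2 b) :
  conf i p -> is_kernel i2 p -> conf i2 p.
Proof.
move=> Hc Hk2.
have Hk := conf_ker Hc.
have [al Hal] := ker_fact Hk2 (conf_pi Hc).
have [be Hbe] := ker_fact Hk Hk2.1.
apply: (conf_iso (al := al) (be := idm b) (ga := idm c) _ _ _ _ _ Hc).
- exists be; split.
  + apply: (ker_mono Hk); by rewrite Defs.compA Hbe Hal compm1.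
  + apply: (ker_mono Hk2); by rewrite Defs.compA Hal Hbe compm1.
- exact: iso_id.
- exact: iso_id.
- by rewrite comp1m Hal.
- by rewrite comp1m compm1.
Qed.

Lemma coker_conf a b c c2 (i : mor a b) (p : mor b c) (p2 : mor b c2) :
  conf i p -> is_cokernel i p2 -> conf i p2.
Proof.
move=> Hc Hk2.
have Hk := conf_coker Hc.
have [ga Hga] := coker_fact Hk Hk2.1.
have [be Hbe] := coker_fact Hk2 (conf_pi Hc).
apply: (conf_iso (al := idm a) (be := idm b) (ga := ga) _ _ _ _ _ Hc).
- exact: iso_id.
- exact: iso_id.
- exists be; split.
  + apply: (coker_epi Hk); by rewrite -Defs.compA Hga Hbe comp1m.
  + apply: (coker_epi Hk2); by rewrite -Defs.compA Hbe Hga comp1m.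
- by rewrite comp1m compm1.
- by rewrite Hga compm1.
Qed.


Lemma pb_sym b c c' P (p : mor b c) (f : mor c' c) (f' : mor P b) (p' : mor P c') :
  is_pullback p f f' p' -> is_pullback f p p' f'.
Proof.
move=> [Hsq Hpb]; split=> [//|x u v Huv].
have [w [[H1 H2] Hw]] := Hpb x v u (esym Huv).
exists w; split=> // w' [H1' H2']; exact: Hw.
Qed.

Lemma pb_uniq b c c' P (p : mor b c) (f : mor c' c) (f' : mor P b) (p' : mor P c') :
  is_pullback p f f' p' -> forall x (w1 w2 : mor x P),
  f' \oc w1 = f' \oc w2 -> p' \oc w1 = p' \oc w2 -> w1 = w2.
Proof.
move=> [Hsq Hpb] x w1 w2 H1 H2.
have Hs : p \oc (f' \oc w1) = f \oc (p' \oc w1) by rewrite !Defs.compA Hsq.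
have [w [_ Hw]] := Hpb x _ _ Hs.
by rewrite -(Hw w1 (conj erefl erefl)) (Hw w2 (conj (esym H1) (esym H2))).
Qed.

Lemma pb_ex b c c' P (p : mor b c) (f : mor c' c) (f' : mor P b) (p' : mor P c') :
  is_pullback p f f' p' -> forall x (u : mor x b) (v : mor x c'), p \oc u = f \oc v ->
  exists w : mor x P, f' \oc w = u /\ p' \oc w = v.
Proof. move=> [_ Hpb] x u v /Hpb [w [Hw _]]; by exists w. Qed.

Lemma po_uniq c d0 a0 P (a : mor c d0) (b : mor c a0) (d : mor d0 P) (m : mor a0 P) :
  is_pushout a b d m -> forall x (w1 w2 : mor P x),
  w1 \oc d = w2 \oc d -> w1 \oc m = w2 \oc m -> w1 = w2.
Proof.
move=> [Hsq Hpo] x w1 w2 H1 H2.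
have Hs : (w1 \oc d) \oc a = (w1 \oc m) \oc b by rewrite -!Defs.compA Hsq.
have [w [_ Hw]] := Hpo x _ _ Hs.
by rewrite -(Hw w1 (conj erefl erefl)) (Hw w2 (conj (esym H1) (esym H2))).
Qed.

Lemma po_ex c d0 a0 P (a : mor c d0) (b : mor c a0) (d : mor d0 P) (m : mor a0 P) :
  is_pushout a b d m -> forall x (u : mor d0 x) (v : mor a0 x), u \oc a = v \oc b ->
  exists w : mor P x, w \oc d = u /\ w \oc m = v.
Proof. move=> [_ Hpo] x u v /Hpo [w [Hw _]]; by exists w. Qed.

Lemma pb_def (HE : deflation_exact C) a b c c' P (i : mor a b) (p : mor b c)
  (f : mor c' c) (f' : mor P b) (p' : mor P c') :
  conf i p -> is_pullback p f f' p' ->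
  exists w : mor a P, [/\ conf w p', f' \oc w = i & p' \oc w = 0].
Proof.
move=> Hc Hpb.
have Hd : deflation p by exists a, i.
case: HE => _ [_ R2].
have [P1 [f1 [p1 [Hpb1 [k1 [kk Hck]]]]]] := R2 _ _ _ p f Hd.
have [th [Hth1 Hth2]] := pb_ex Hpb Hpb1.1.
have [th' [Hth1' Hth2']] := pb_ex Hpb1 Hpb.1.
have E1 : th \oc th' = idm P.
  apply: (pb_uniq Hpb); by rewrite ?compm1 // !Defs.compA ?Hth1 ?Hth2 ?Hth1' ?Hth2'.
have E2 : th' \oc th = idm P1.
  apply: (pb_uniq Hpb1); by rewrite ?compm1 // !Defs.compA ?Hth1 ?Hth2 ?Hth1' ?Hth2'.
have Hc' : conf (th \oc kk) p'.
  apply: (conf_iso (al := idm k1) (be := th) (ga := idm c') _ _ _ _ _ Hck).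
  - exact: iso_id.
  - by exists th'.
  - exact: iso_id.
  - by rewrite compm1.
  - by rewrite comp1m Hth2.
have Hs : p \oc i = f \oc 0 by rewrite comp0r (conf_pi Hc).
have [w [Hw1 Hw2]] := pb_ex Hpb Hs.
exists w; split=> //.
apply: (ker_conf Hc'); split=> // x t Ht.
have Hs2 : p \oc (f' \oc t) = 0 by rewrite Defs.compA Hpb.1 -Defs.compA Ht comp0r.
have [s Hs'] := ker_fact (conf_ker Hc) Hs2.
exists s; split.
- apply: (pb_uniq Hpb); by rewrite Defs.compA ?Hw1 ?Hw2 ?Hs' ?Ht ?comp0l.
- move=> s' Hs''; apply: (conf_mono Hc).
  by rewrite Hs' -Hs'' -Hw1 Defs.compA.
Qed.

Lemma pb_deflation (HE : deflation_exact C) b c c' P (p : mor b c)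
  (f : mor c' c) (f' : mor P b) (p' : mor P c') :
  deflation p -> is_pullback p f f' p' -> deflation p'.
Proof.
move=> [a [i Hc]] Hpb; have [w [Hw _ _]] := pb_def HE Hc Hpb; by exists a, w.
Qed.


Lemma zero_def (HE : deflation_exact C) a b c (i : mor a b) (p : mor b c) :
  conf i p -> forall z : mor a (zero_obj C), deflation z.
Proof.
move=> Hc z.
apply: (pb_deflation HE (p := p) (f := 0 : mor (zero_obj C) c) (f' := i)).
  by exists a, i.
split; first by rewrite comp0l (conf_pi Hc).
move=> x u v; rewrite comp0l => Hu.
have [w Hw] := ker_fact (conf_ker Hc) Hu.
exists w; split; first by split=> //; exact: zero_in.
move=> w' [Hw' _]; apply: (conf_mono Hc); by rewrite Hw Hw'.
Qed.

Lemma proj_def (HE : deflation_exact C) X A S (t1 : mor X S) (t2 : mor A S)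
  (s1 : mor S X) (s2 : mor S A) (z : mor X (zero_obj C)) :
  deflation z -> s1 \oc t1 = idm X -> s2 \oc t2 = idm A ->
  s1 \oc t2 = 0 -> s2 \oc t1 = 0 -> t1 \oc s1 + t2 \oc s2 = idm S ->
  deflation s2.
Proof.
move=> Hz E1 E2 E3 E4 E5.
apply: (pb_deflation HE (p := z) (f := 0 : mor A (zero_obj C)) (f' := s1)) => //.
split; first exact: zero_in.
move=> x u v _; exists (t1 \oc u + t2 \oc v); split.
  by rewrite !compDr !Defs.compA E1 E2 E3 E4 !comp0l !comp1m addr0 add0r.
move=> w [<- <-]; by rewrite !Defs.compA -compDl E5 comp1m.
Qed.


Lemma canc a b x (g : mor b a) (f : mor a b) (u : mor x a) :
  g \oc f = idm a -> g \oc (f \oc u) = u.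
Proof. by move=> H; rewrite Defs.compA H comp1m. Qed.
Lemma canz a b c x (g : mor b c) (f : mor a b) (u : mor x a) :
  g \oc f = 0 -> g \oc (f \oc u) = 0.
Proof. by move=> H; rewrite Defs.compA H comp0l. Qed.
Lemma canc' a b c (g : mor b c) (f : mor a b) (h : mor a c) x (u : mor x a) :
  g \oc f = h -> g \oc (f \oc u) = h \oc u.
Proof. by move=> H; rewrite Defs.compA H. Qed.


Lemma bip_ext (X Y S : obj C) (r1 : mor X S) (r2 : mor Y S) (q1 : mor S X) (q2 : mor S Y) :
  r1 \oc q1 + r2 \oc q2 = idm S -> forall x (u v : mor x S),
  q1 \oc u = q1 \oc v -> q2 \oc u = q2 \oc v -> u = v.
Proof.
move=> E x u v H1 H2.
by rewrite -[u]comp1m -[v]comp1m -E !compDl -!Defs.compA H1 H2.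
Qed.

End Basics.

Lemma part1 (C : ConflationCat) (A : obj C -> Prop) :
  deflation_exact C -> admissibly_deflation_percolating A ->
  forall (X Y Z X' Y' Z' : obj C)
          (i : mor X Y) (p : mor Y Z) (i' : mor X' Y') (p' : mor Y' Z')
          (f : mor X X') (g : mor Y Y') (h : mor Z Z'),
     conf i p -> conf i' p' ->
     g \oc i = i' \oc f -> h \oc p = p' \oc g ->
  forall AA (a : mor X' AA), conf f a -> A AA ->
  forall W (k : mor Z' W), conf h k ->
  exists Q2 (d2 : mor Y' Q2) (m2 : mor AA Q2) (wW : mor Q2 W),
    conf g d2 /\ conf m2 wW.
Proof.
move=> HE HA X Y Z X' Y' Z' i p i' p' f g h Hc Hc' Hg Hh AA a Hfa HAA W k Hhk.
case: (HE) => _ [R1 R2].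
case: (HA) => _ [A1 [_ A3]].
have Hdp' : deflation p' by exists X', i'.
have [P [e [q [Hpb Hdq]]]] := R2 _ _ _ p' h Hdp'.
have [j [Hjq Hej Hqj]] := pb_def HE Hc' Hpb.
have Hkp : deflation (k \oc p') by apply: R1 => //; exists Z, h.
have Hek : conf e (k \oc p').
  case: Hkp => K0 [k0 Hk0]; apply: (ker_conf Hk0); split.
    by rewrite -Defs.compA Hpb.1 Defs.compA (conf_pi Hhk) comp0l.
  move=> x t Ht.
  have Ht' : k \oc (p' \oc t) = 0 by rewrite Defs.compA.
  have [s Hs] := ker_fact (conf_ker Hhk) Ht'.
  have [u [Hu1 Hu2]] := pb_ex Hpb (esym Hs).
  exists u; split=> // u' Hu'.
  apply: (pb_uniq Hpb); first by rewrite Hu1 Hu'.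
  apply: (conf_mono Hhk).
  by rewrite !Defs.compA -!Hpb.1 -!Defs.compA Hu1 Hu'.
have [g1 [Hg1e Hg1q]] := pb_ex Hpb (esym Hh).
have Hg1i : g1 \oc i = j \oc f.
  apply: (pb_uniq Hpb).
    by rewrite !Defs.compA Hg1e Hej Hg.
  by rewrite !Defs.compA Hg1q Hqj (conf_pi Hc) comp0l.
have Hjinf : inflation j by exists Z, q.
have Hadef : deflation a by exists X, f.
have [Q [d [m [Hpo Hdd Hmi]]]] := A3 _ _ _ j a Hjinf Hadef HAA.
have Hs0 : q \oc j = 0 \oc a by rewrite Hqj comp0l.
have [r [Hrd Hrm]] := po_ex Hpo Hs0.
have Hs1 : (d \oc g1) \oc i = 0.
  by rewrite -Defs.compA Hg1i Defs.compA Hpo.1 -Defs.compA (conf_pi Hfa) comp0r.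
have [s Hs] := coker_fact (conf_coker Hc) Hs1.
have Hrs : r \oc s = idm Z.
  apply: (conf_epi Hc); by rewrite -Defs.compA Hs Defs.compA Hrd Hg1q comp1m.
case: (Hmi) => Q' [cm Hcm].
case: (Hdd) => K1 [k1 Hk1].
have Hs2 : (cm \oc d) \oc j = 0.
  by rewrite -Defs.compA Hpo.1 Defs.compA (conf_pi Hcm) comp0l.
have [phi Hphi] := coker_fact (conf_coker Hjq) Hs2.
have Hcmr : cm = phi \oc r.
  apply: (conf_epi Hk1); by rewrite -Defs.compA Hrd Hphi.
have Hs3 : cm \oc (idm Q - s \oc r) = 0.
  by rewrite compBr compm1 {2}Hcmr !Defs.compA -(Defs.compA phi) Hrs compm1 -Hcmr subrr.
have [rho Hrho] := ker_fact (conf_ker Hcm) Hs3.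
have Hrhom : rho \oc m = idm AA.
  apply: (conf_mono Hcm); by rewrite Defs.compA Hrho compBl comp1m -Defs.compA Hrm comp0r subr0 compm1.
have Hrhos : rho \oc s = 0.
  apply: (conf_mono Hcm); by rewrite Defs.compA Hrho compBl comp1m -Defs.compA Hrs compm1 subrr comp0r.
have HzZ := zero_def HE Hhk (0 : mor Z (zero_obj C)).
have E5 : s \oc r + m \oc rho = idm Q by rewrite Hrho addrC subrK.
have Hrhodef : deflation rho := proj_def HE HzZ Hrs Hrhom Hrm Hrhos E5.
have Hpi : deflation (rho \oc d) by apply: R1.
have Hg1m0 : forall x (u : mor x Y), g1 \oc u = 0 -> u = 0.
  move=> x u Hu.
  have Hpu : p \oc u = 0 by rewrite -Hg1q -Defs.compA Hu comp0r.
  have [x0 Hx0] := ker_fact (conf_ker Hc) Hpu.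
  have Hfx : f \oc x0 = 0.
    apply: (conf_mono Hjq); by rewrite comp0r Defs.compA -Hg1i -Defs.compA Hx0 Hu.
  have Hx00 : x0 = 0 by apply: (conf_mono Hfa); rewrite Hfx comp0r.
  by rewrite -Hx0 Hx00 comp0r.
have Hg1m : forall x (u v : mor x Y), g1 \oc u = g1 \oc v -> u = v.
  move=> x u v Huv; apply/eqP; rewrite -subr_eq0; apply/eqP.
  by apply: Hg1m0; rewrite compBr Huv subrr.
have Hkerd : forall x (t2 : mor x P), d \oc t2 = 0 -> exists x0 : mor x X, t2 = g1 \oc (i \oc x0).
  move=> x t2 Ht2.
  have Hqt : q \oc t2 = 0 by rewrite -Hrd -Defs.compA Ht2 comp0r.
  have [x' Hx'] := ker_fact (conf_ker Hjq) Hqt.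
  have Hax : a \oc x' = 0.
    apply: (conf_mono Hcm); by rewrite comp0r Defs.compA -Hpo.1 -Defs.compA Hx'.
  have [x0 Hx0] := ker_fact (conf_ker Hfa) Hax.
  exists x0; by rewrite Defs.compA Hg1i -Defs.compA Hx0 Hx'.
have Hker : is_kernel g1 (rho \oc d).
  split; first by rewrite -Defs.compA -Hs Defs.compA Hrhos comp0l.
  move=> x t Ht.
  have Hdt : d \oc t = s \oc (q \oc t).
    by rewrite -[d \oc t]comp1m -E5 compDl -!Defs.compA (Defs.compA rho) Ht comp0r addr0 (Defs.compA r) Hrd.
  have Hdp : deflation p by exists X, i.
  have [T' [y [tau [Hpb2 Htau]]]] := R2 _ _ _ p (q \oc t) Hdp.
  have Hd0 : d \oc (t \oc tau - g1 \oc y) = 0.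
    rewrite compBr !Defs.compA Hdt -Hs -!Defs.compA Hpb2.1.
    by rewrite !Defs.compA subrr.
  have [x0 Hx0] := Hkerd _ _ Hd0.
  have Ey : t \oc tau = g1 \oc (y + i \oc x0).
    by rewrite compDr -Hx0 addrC subrK.
  case: Htau => K2 [kt Hkt].
  have Hy2 : (y + i \oc x0) \oc kt = 0.
    apply: Hg1m0; by rewrite Defs.compA -Ey -Defs.compA (conf_pi Hkt) comp0r.
  have [u Hu] := coker_fact (conf_coker Hkt) Hy2.
  exists u; split.
    apply: (conf_epi Hkt); by rewrite -Defs.compA Hu Ey.
  move=> u' Hu'; apply: Hg1m; rewrite Hu'.
  apply: (conf_epi Hkt); by rewrite -Defs.compA Hu Ey.
have Hg1pi : conf g1 (rho \oc d).
  case: Hpi => K3 [k3 Hk3]; exact: (ker_conf Hk3 Hker).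
have Hei : inflation e by exists W, (k \oc p').
have [Q2 [d2 [m2 [Hpo2 Hd2 Hm2]]]] := A3 _ _ _ e (rho \oc d) Hei Hpi HAA.
have Hs4 : (k \oc p') \oc e = 0 \oc (rho \oc d) by rewrite (conf_pi Hek) comp0l.
have [wW [HwW1 HwW2]] := po_ex Hpo2 Hs4.
case: (Hd2) => K4 [k4 Hk4].
case: (Hm2) => Q5 [c5 Hc5].
exists Q2, d2, m2, wW; split.
  rewrite -Hg1e; apply: (ker_conf Hk4); split.
    by rewrite Defs.compA Hpo2.1 -Defs.compA (conf_pi Hg1pi) comp0r.
  move=> x t Ht.
  have Ht1 : (k \oc p') \oc t = 0 by rewrite -HwW1 -Defs.compA Ht comp0r.
  have [s0 Hs0'] := ker_fact (conf_ker Hek) Ht1.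
  have Hs5 : (rho \oc d) \oc s0 = 0.
    apply: (conf_mono Hc5); by rewrite comp0r Defs.compA -Hpo2.1 -Defs.compA Hs0' Ht.
  have [u Hu] := ker_fact (conf_ker Hg1pi) Hs5.
  exists u; split; first by rewrite -Defs.compA Hu.
  move=> u' Hu'; apply: Hg1m; apply: (conf_mono Hek).
  by rewrite !Defs.compA Hu' -Defs.compA Hu.
apply: (coker_conf Hc5); split=> // x t Ht.
have Ht1 : (t \oc d2) \oc e = 0.
  by rewrite -Defs.compA Hpo2.1 Defs.compA Ht comp0l.
have [s1 Hs1'] := coker_fact (conf_coker Hek) Ht1.
exists s1; split.
  apply: (conf_epi Hk4); by rewrite -Defs.compA HwW1.
move=> v Hv; apply: (conf_epi Hek).
by rewrite Hs1' -HwW1 Defs.compA Hv.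
Qed.

Lemma part2 (C : ConflationCat) (A : obj C -> Prop) :
  deflation_exact C -> admissibly_deflation_percolating A ->
  forall (X Y Z X' Y' Z' : obj C)
          (i : mor X Y) (p : mor Y Z) (i' : mor X' Y') (p' : mor Y' Z')
          (f : mor X X') (g : mor Y Y') (h : mor Z Z'),
     conf i p -> conf i' p' ->
     g \oc i = i' \oc f -> h \oc p = p' \oc g ->
  forall AA (a : mor AA X), conf a f -> A AA ->
  forall W (k : mor W Z), conf k h ->
  exists K0 (y0 : mor K0 Y) (al : mor AA K0) (pi0 : mor K0 W),
    conf y0 g /\ conf al pi0.
Proof.
move=> HE HA X Y Z X' Y' Z' i p i' p' f g h Hc Hc' Hg Hh AA a Hfa HAA W k Hhk.
case: (HE) => _ [R1 R2].
case: (HA) => _ [A1 [_ A3]].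
have Hdp' : deflation p' by exists X', i'.
have [P [e [q [Hpb Hdq]]]] := R2 _ _ _ p' h Hdp'.
have [j [Hjq Hej Hqj]] := pb_def HE Hc' Hpb.
have [we [Hwe Hqwe Hewe]] := pb_def HE Hhk (pb_sym Hpb).
have [g1 [Hg1e Hg1q]] := pb_ex Hpb (esym Hh).
have Hg1i : g1 \oc i = j \oc f.
  apply: (pb_uniq Hpb).
    by rewrite !Defs.compA Hg1e Hej Hg.
  by rewrite !Defs.compA Hg1q Hqj (conf_pi Hc) comp0l.
have [S [i1 [i2 [p1 [p2 [B1 B2 B3 B4 B5]]]]]] := biproducts X' Y.
pose Phi := j \oc p1 + g1 \oc p2.
have Phi1 : Phi \oc i1 = j.
  by rewrite /Phi compDl -!Defs.compA B1 B4 comp0r compm1 addr0.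
have Phi2 : Phi \oc i2 = g1.
  by rewrite /Phi compDl -!Defs.compA B3 B2 comp0r compm1 add0r.
have HpbS : is_pullback p q p2 Phi.
  split.
    by rewrite /Phi compDr !Defs.compA Hqj Hg1q comp0l add0r.
  move=> x u v Huv.
  have Hq0 : q \oc (v - g1 \oc u) = 0.
    by rewrite compBr Defs.compA Hg1q Huv subrr.
  have [w1 Hw1] := ker_fact (conf_ker Hjq) Hq0.
  exists (i1 \oc w1 + i2 \oc u); split.
    split.
      by rewrite compDr (canz _ B4) (canc _ B2) add0r.
    by rewrite compDr !Defs.compA Phi1 Phi2 Hw1 subrK.
  move=> w' [Hw'1 Hw'2].
  have Ep1 : p1 \oc w' = w1.
    apply: (conf_mono Hjq); rewrite Hw1 -Hw'2 -Hw'1 /Phi compDl.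
    by rewrite !Defs.compA addrK.
  by rewrite -[w']comp1m -B5 compDl -!Defs.compA Ep1 Hw'1.
have [ka [Hka Hp2ka HPka]] := pb_def HE Hc HpbS.
have Hp1ka : p1 \oc ka = - f.
  apply: (conf_mono Hjq); rewrite compNr -Hg1i -Hp2ka.
  apply/eqP; rewrite -addr_eq0; apply/eqP.
  by rewrite !Defs.compA -compDl -HPka.
have Hcok : is_cokernel (i \oc a) g1.
  split; first by rewrite Defs.compA Hg1i -Defs.compA (conf_pi Hfa) comp0r.
  move=> x t Ht.
  have Ht' : (t \oc i) \oc a = 0 by rewrite -Defs.compA.
  have [s Hs] := coker_fact (conf_coker Hfa) Ht'.
  have Hs2 : (s \oc p1 + t \oc p2) \oc ka = 0.
    by rewrite compDl -!Defs.compA Hp1ka Hp2ka compNr Hs addNr.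
  have [w Hw] := coker_fact (conf_coker Hka) Hs2.
  exists w; split.
    by rewrite -Phi2 Defs.compA Hw compDl -!Defs.compA B3 B2 comp0r compm1 add0r.
  move=> w' Hw'; apply: (conf_epi Hka); rewrite Hw.
  have Ewj : w' \oc j = s.
    apply: (conf_epi Hfa); by rewrite -Defs.compA -Hg1i Defs.compA Hw' Hs.
  by rewrite /Phi compDr !Defs.compA Ewj Hw'.
have [S2 [r1 [r2 [q1 [q2 [C1 C2 C3 C4 C5]]]]]] := biproducts X Y.
pose F := i1 \oc f \oc q1 + i2 \oc q2.
have F1 : F \oc r1 = i1 \oc f.
  by rewrite /F compDl -!Defs.compA C1 C4 comp0r compm1 addr0.
have F2 : F \oc r2 = i2.
  by rewrite /F compDl -!Defs.compA C3 C2 !comp0r compm1 add0r.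
have HpbF : is_pullback f p1 q1 F.
  split.
    by rewrite /F compDr !Defs.compA B1 B3 comp1m comp0l addr0.
  move=> x u v Huv.
  exists (r1 \oc u + r2 \oc (p2 \oc v)); split.
    split.
      by rewrite compDr (canc _ C1) (canz _ C3) addr0.
    rewrite compDr !Defs.compA F1 F2 -Defs.compA Huv !Defs.compA -compDl B5.
    by rewrite comp1m.
  move=> w' [Hw'1 Hw'2].
  have Eq2 : q2 \oc w' = p2 \oc v.
    by rewrite -Hw'2 Defs.compA /F compDr !Defs.compA B4 B2 !comp0l comp1m add0r.
  by rewrite -[w']comp1m -C5 compDl -!Defs.compA Hw'1 Eq2.
have HdF : deflation F by apply: (pb_deflation HE _ HpbF); exists AA, a.
have HdPhi : deflation Phi by exists X, ka.
have HdD : deflation (Phi \oc F) by apply: R1.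
have [S3 [t1 [t2 [s1 [s2 [D1 D2 D3 D4 D5]]]]]] := biproducts X AA.
pose c := r1 \oc s1 + r2 \oc (i \oc a \oc s2 - i \oc s1).
have PF1 : (Phi \oc F) \oc r1 = g1 \oc i.
  by rewrite -Defs.compA F1 Defs.compA Phi1 Hg1i.
have PF2 : (Phi \oc F) \oc r2 = g1.
  by rewrite -Defs.compA F2 Phi2.
have Hg1ia : g1 \oc (i \oc a) = 0.
  by rewrite Defs.compA Hg1i -Defs.compA (conf_pi Hfa) comp0r.
have Hq1c : q1 \oc c = s1.
  by rewrite /c compDr (canc _ C1) (canz _ C3) addr0.
have Hq2c : q2 \oc c = i \oc a \oc s2 - i \oc s1.
  by rewrite /c compDr (canz _ C4) (canc _ C2) add0r.
have Hia_mono : forall x (u : mor x AA), (i \oc a) \oc u = 0 -> u = 0.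
  move=> x u Hu; apply: (conf_mono Hfa); rewrite comp0r.
  by apply: (conf_mono Hc); rewrite comp0r Defs.compA.
have Hkc : is_kernel c (Phi \oc F).
  split.
    rewrite /c compDr !Defs.compA PF1 PF2 compBr -!Defs.compA.
    by rewrite (Defs.compA i a) (Defs.compA g1 (i \oc a)) Hg1ia comp0l add0r subrr.
  move=> x t Ht.
  have Ht' : Phi \oc (F \oc t) = 0 by rewrite Defs.compA.
  have [x0 Hx0] := ker_fact (conf_ker Hka) Ht'.
  have Ef : f \oc (q1 \oc t + x0) = 0.
    have : p1 \oc (F \oc t) = p1 \oc (ka \oc x0) by rewrite Hx0.
    rewrite /F compDl compDr !Defs.compA B1 B3 comp1m !comp0l addr0 Hp1ka compNl.
    by move=> E; rewrite compDr Defs.compA E addNr.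
  have [z Hz] := ker_fact (conf_ker Hfa) Ef.
  have Eq2 : q2 \oc t = i \oc x0.
    have : p2 \oc (F \oc t) = p2 \oc (ka \oc x0) by rewrite Hx0.
    by rewrite /F compDl compDr !Defs.compA B4 B2 comp1m !comp0l add0r Hp2ka.
  have Hcu : c \oc (t1 \oc (q1 \oc t) + t2 \oc z) = t.
    apply: (bip_ext C5).
      by rewrite Defs.compA Hq1c compDr (canc _ D1) (canz _ D3) addr0.
    rewrite Defs.compA Hq2c Eq2 compBl !compDr -!Defs.compA.
    rewrite (canz _ D4) (canc _ D2) (canc _ D1) (canz _ D3) !comp0r addr0 add0r.
    by rewrite Hz compDr addrAC subrr add0r.
  exists (t1 \oc (q1 \oc t) + t2 \oc z); split=> // u' Hu'.
  have Hc0 : forall y (v : mor y S3), c \oc v = 0 -> v = 0.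
    move=> y v Hv.
    have E1 : s1 \oc v = 0 by rewrite -Hq1c -Defs.compA Hv comp0r.
    have E2 : s2 \oc v = 0.
      apply: Hia_mono.
      have : q2 \oc (c \oc v) = 0 by rewrite Hv comp0r.
      by rewrite Defs.compA Hq2c compBl -!Defs.compA E1 !comp0r subr0 !Defs.compA.
    apply: (bip_ext D5); by rewrite ?E1 ?E2 comp0r.
  apply/eqP; rewrite -subr_eq0; apply/eqP; apply: Hc0.
  by rewrite compBr Hu' Hcu subrr.
have Hcc : conf c (Phi \oc F).
  case: HdD => K5 [k5 Hk5]; exact: (ker_conf Hk5 Hkc).
have HzX := zero_def HE Hc (0 : mor X (zero_obj C)).
have Hs2d : deflation s2 := proj_def HE HzX D1 D2 D3 D4 D5.
have Hci : inflation c by exists P, (Phi \oc F).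
have [Q0 [d0 [m0 [Hpo Hd0 Hm0]]]] := A3 _ _ _ c s2 Hci Hs2d HAA.
pose dd := i \oc q1 + q2.
have Hddc : dd \oc c = (i \oc a) \oc s2.
  rewrite /dd compDl -Defs.compA Hq1c Hq2c.
  by rewrite addrC subrK.
have [w [Hw1 Hw2]] := po_ex Hpo Hddc.
have Ect1 : c \oc t1 = r1 - r2 \oc i.
  apply: (bip_ext C5).
    by rewrite Defs.compA Hq1c D1 compBr C1 (canz _ C3) subr0.
  rewrite Defs.compA Hq2c compBl -!Defs.compA D4 D1 !comp0r compm1 sub0r.
  by rewrite compBr (canc _ C2) C4 sub0r.
have Ect2 : c \oc t2 = r2 \oc (i \oc a).
  apply: (bip_ext C5).
    by rewrite Defs.compA Hq1c D3 (canz _ C3).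
  rewrite Defs.compA Hq2c compBl -!Defs.compA D2 D3 !comp0r compm1 subr0.
  by rewrite (canc _ C2).
have Ed0 : d0 \oc r1 = d0 \oc (r2 \oc i).
  apply/eqP; rewrite -subr_eq0; apply/eqP.
  by rewrite -compBr -Ect1 Defs.compA Hpo.1 -Defs.compA D4 comp0r.
have Eww' : w \oc (d0 \oc r2) = idm Y.
  by rewrite Defs.compA Hw1 /dd compDl -Defs.compA C3 comp0r C2 add0r.
have Ew'w : (d0 \oc r2) \oc w = idm Q0.
  apply: (po_uniq Hpo).
    rewrite -Defs.compA Hw1 comp1m /dd compDr -!Defs.compA (Defs.compA r2 i) (Defs.compA d0 (r2 \oc i)) -Ed0.
    by rewrite -!Defs.compA -compDr C5 compm1.
  rewrite -Defs.compA Hw2 comp1m -Defs.compA -Ect2 Defs.compA Hpo.1.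
  by rewrite -Defs.compA D2 compm1.
case: Hm0 => Q6 [c0 Hc0].
have Hiac : conf (i \oc a) (c0 \oc (d0 \oc r2)).
  apply: (conf_iso (al := idm AA) (be := w) (ga := idm Q6) _ _ _ _ _ Hc0).
  - exact: iso_id.
  - by exists (d0 \oc r2).
  - exact: iso_id.
  - by rewrite Hw2 compm1.
  - by rewrite comp1m -Defs.compA Ew'w compm1.
have Hg1c : conf (i \oc a) g1 := coker_conf Hiac Hcok.
have Hg1d : deflation g1 by exists AA, (i \oc a).
have Hed : deflation e by exists W, we.
have Hgd : deflation (e \oc g1) by apply: R1.
have [K0 [y0 [pi0 [Hpb3 Hpi0]]]] := R2 _ _ _ g1 we Hg1d.
have [al [Hal Hy0al Hpi0al]] := pb_def HE Hg1c Hpb3.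
exists K0, y0, al, pi0; split=> //.
rewrite -Hg1e; case: Hgd => K7 [k7 Hk7]; apply: (ker_conf Hk7); split.
  by rewrite -Defs.compA Hpb3.1 Defs.compA Hewe comp0l.
move=> x t Ht.
have Ht' : e \oc (g1 \oc t) = 0 by rewrite Defs.compA.
have [s Hs] := ker_fact (conf_ker Hwe) Ht'.
have [u [Hu1 Hu2]] := pb_ex Hpb3 (esym Hs).
exists u; split=> // u' Hu'.
apply: (pb_uniq Hpb3); first by rewrite Hu1 Hu'.
apply: (conf_mono Hwe).
by rewrite !Defs.compA -!Hpb3.1 -!Defs.compA Hu1 Hu'.
Qed.

Theorem mainTheorem13 (C : ConflationCat) (A : obj C -> Prop) :
  deflation_exact C -> admissibly_deflation_percolating A ->
  (forall (X Y Z X' Y' Z' : obj C)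
          (i : mor X Y) (p : mor Y Z) (i' : mor X' Y') (p' : mor Y' Z')
          (f : mor X X') (g : mor Y Y') (h : mor Z Z'),
     conf i p -> conf i' p' ->
     g \oc i = i' \oc f -> h \oc p = p' \oc g ->
     inflation f -> inflation h ->
     (Ainv_inflation A f -> inflation g) /\
     (Ainv_inflation A f -> Ainv_inflation A h -> Ainv_inflation A g)) /\
  (forall (X Y Z X' Y' Z' : obj C)
          (i : mor X Y) (p : mor Y Z) (i' : mor X' Y') (p' : mor Y' Z')
          (f : mor X X') (g : mor Y Y') (h : mor Z Z'),
     conf i p -> conf i' p' ->
     g \oc i = i' \oc f -> h \oc p = p' \oc g ->
     deflation f -> deflation h ->
     (Ainv_deflation A f -> deflation g) /\
     (Ainv_deflation A f -> Ainv_deflation A h -> Ainv_deflation A g)).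
Proof.
move=> HE HA.
have A1 := HA.2.1.
split.
  move=> X Y Z X' Y' Z' i p i' p' f g h Hc Hc' Hg Hh _ Hhinf; split.
    move=> [AA [a [Hfa HAA]]]; case: Hhinf => W [k Hhk].
    have [Q2 [d2 [m2 [wW [H1 H2]]]]] := part1 HE HA Hc Hc' Hg Hh Hfa HAA Hhk.
    by exists Q2, d2.
  move=> [AA [a [Hfa HAA]]] [W [k [Hhk HW]]].
  have [Q2 [d2 [m2 [wW [H1 H2]]]]] := part1 HE HA Hc Hc' Hg Hh Hfa HAA Hhk.
  exists Q2, d2; split=> //; by apply/(A1 _ _ _ _ _ H2).
move=> X Y Z X' Y' Z' i p i' p' f g h Hc Hc' Hg Hh _ Hhdef; split.
  move=> [AA [a [Hfa HAA]]]; case: Hhdef => W [k Hhk].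
  have [K0 [y0 [al [pi0 [H1 H2]]]]] := part2 HE HA Hc Hc' Hg Hh Hfa HAA Hhk.
  by exists K0, y0.
move=> [AA [a [Hfa HAA]]] [W [k [Hhk HW]]].
have [K0 [y0 [al [pi0 [H1 H2]]]]] := part2 HE HA Hc Hc' Hg Hh Hfa HAA Hhk.
exists K0, y0; split=> //; by apply/(A1 _ _ _ _ _ H2).
Qed.
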